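(* Let $\Gamma\in(1,2]$ and consider the two-dimensional special relativistic hydrodynamics (RHD) system with ideal-gas equation of state, as described in the context. Let $\bm{U}_{LD},\bm{U}_{RD},\bm{U}_{LU},\bm{U}_{RU}\in\mathcal{G}$ be four admissible states, and let $\bm{F}_{\ast}=\bm{F}(\bm{U}_{\ast})$, $\bm{G}_{\ast}=\bm{G}(\bm{U}_{\ast})$ for $\ast\in\{LD,RD,LU,RU\}$. Define the wave speeds $$S_L=2\min_{\ast}\lambda_A^{(1)}(\bm{U}_{\ast}),\quad S_R=2\max_{\ast}\lambda_A^{(4)}(\bm{U}_{\ast}),\quad S_D=2\min_{\ast}\lambda_B^{(1)}(\bm{U}_{\ast}),\quad S_U=2\max_{\ast}\lambda_B^{(4)}(\bm{U}_{\ast}),$$ the min/max being over $\ast\in\{LD,RD,LU,RU\}$, and assume $S_L<0<S_R$ and $S_D<0<S_U$. Then the intermediate state of the two-dimensional HLL Riemann solver $$\bm{U}^{\ast}=\frac{S_RS_U\bm{U}_{RU}+S_LS_D\bm{U}_{LD}-S_RS_D\bm{U}_{RD}-S_LS_U\bm{U}_{LU}}{(S_R-S_L)(S_U-S_D)}-\frac{S_U(\bm{F}_{RU}-\bm{F}_{LU})-S_D(\bm{F}_{RD}-\bm{F}_{LD})}{(S_R-S_L)(S_U-S_D)}-\frac{S_R(\bm{G}_{RU}-\bm{G}_{RD})-S_L(\bm{G}_{LU}-\bm{G}_{LD})}{(S_R-S_L)(S_U-S_D)}$$ is admissible, i.e. writing $\bm{U}^\ast=(D^\ast,\bm{m}^\ast,E^\ast)^T$,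 one has $D^{\ast}>0$, $E^{\ast}>0$ and $(E^{\ast})^2-(D^{\ast})^2-|\bm{m}^{\ast}|^2>0$.
   Context: Units with speed of light $c=1$. Primitive variables: rest-mass density $\rho$, velocity $\bm{u}=(u,v)$ with $|\bm{u}|<1$, pressure $p$. Lorentz factor $\gamma=1/\sqrt{1-|\bm{u}|^2}$, specific internal energy $e$ with $p=(\Gamma-1)\rho e$, specific enthalpy $h=1+e+p/\rho$, sound speed $c_s=\sqrt{\Gamma p/(\rho h)}$. Conservative variables $\bm{U}=(D,\bm{m},E)^T$ with $D=\rho\gamma$, $\bm{m}=Dh\gamma\bm{u}$, $E=Dh\gamma-p$; fluxes $\bm{F}(\bm{U})=(Du,\ \bm{m}u+p(1,0),\ (E+p)u)^T$ and $\bm{G}(\bm{U})=(Dv,\ \bm{m}v+p(0,1),\ (E+p)v)^T$, the system being $\partial_t\bm{U}+\partial_x\bm{F}+\partial_y\bm{G}=0$. The admissible set is $\mathcal{G}=\{\bm{U}=(D,\bm{m},E)^T: \rho>0,\ p>0,\ |\bm{u}|<1\}$, equivalently $\{D>0,\ E>\sqrt{D^2+|\bm{m}|^2}\}$ (primitive variables are recovered from $\bm{U}\in\mathcal{G}$). For $i=1,2$ (with $u_1=u$, $u_2=v$) the extreme eigenvalues of $\partial\bm{F}_i/\partial\bm{U}$ are $$\lambda_{i}^{(1),(4)}(\bm{U})=\frac{u_i(1-c_s^2)\mp c_s\gamma^{-1}\sqrt{1-u_i^2-c_s^2(|\bm{u}|^2-u_i^2)}}{1-c_s^2|\bm{u}|^2};$$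 $\lambda_A^{(k)}:=\lambda_1^{(k)}$ (the $x$-direction, flux $\bm{F}$) and $\lambda_B^{(k)}:=\lambda_2^{(k)}$ (the $y$-direction, flux $\bm{G}$), $k=1,4$. *)

(* Defs.v *)
From Stdlib Require Import Reals Lra.
Open Scope R_scope.

Record prim := Prim { rho : R; vx : R; vy : R; pr : R }.

Record cons := Cons { cD : R; cm1 : R; cm2 : R; cE : R }.

Definition vel2 (w : prim) : R := vx w ^ 2 + vy w ^ 2.

Definition admissible_prim (w : prim) : Prop :=
  0 < rho w /\ 0 < pr w /\ vel2 w < 1.

Definition lorentz (w : prim) : R := / sqrt (1 - vel2 w).
Definition int_energy (Gam : R) (w : prim) : R := pr w / ((Gam - 1) * rho w).
Definition enthalpy (Gam : R) (w : prim) : R :=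
  1 + int_energy Gam w + pr w / rho w.
Definition sound_speed (Gam : R) (w : prim) : R :=
  sqrt (Gam * pr w / (rho w * enthalpy Gam w)).

Definition to_cons (Gam : R) (w : prim) : cons :=
  let g := lorentz w in
  let D := rho w * g in
  let h := enthalpy Gam w in
  Cons D (D * h * g * vx w) (D * h * g * vy w) (D * h * g - pr w).

Definition fluxF (Gam : R) (w : prim) : cons :=
  let U := to_cons Gam w in
  Cons (cD U * vx w) (cm1 U * vx w + pr w) (cm2 U * vx w) ((cE U + pr w) * vx w).
Definition fluxG (Gam : R) (w : prim) : cons :=
  let U := to_cons Gam w in
  Cons (cD U * vy w) (cm1 U * vy w) (cm2 U * vy w + pr w) ((cE U + pr w) * vy w).

Definition lam_gen (Gam : R) (w : prim) (ui : R) (sgn : R) : R :=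
  let c := sound_speed Gam w in
  let q := vel2 w in
  (ui * (1 - c ^ 2) + sgn * c * / lorentz w
      * sqrt (1 - ui ^ 2 - c ^ 2 * (q - ui ^ 2))) / (1 - c ^ 2 * q).
Definition lamA1 Gam w := lam_gen Gam w (vx w) (-1).
Definition lamA4 Gam w := lam_gen Gam w (vx w) 1.
Definition lamB1 Gam w := lam_gen Gam w (vy w) (-1).
Definition lamB4 Gam w := lam_gen Gam w (vy w) 1.

Definition min4 a b c d := Rmin (Rmin a b) (Rmin c d).
Definition max4 a b c d := Rmax (Rmax a b) (Rmax c d).

Definition cadd (a b : cons) : cons :=
  Cons (cD a + cD b) (cm1 a + cm1 b) (cm2 a + cm2 b) (cE a + cE b).
Definition cscale (k : R) (a : cons) : cons :=
  Cons (k * cD a) (k * cm1 a) (k * cm2 a) (k * cE a).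
Definition csub (a b : cons) : cons := cadd a (cscale (-1) b).

Definition hll2d_state (Gam : R) (wLD wRD wLU wRU : prim) : cons :=
  let SL := 2 * min4 (lamA1 Gam wLD) (lamA1 Gam wRD) (lamA1 Gam wLU) (lamA1 Gam wRU) in
  let SR := 2 * max4 (lamA4 Gam wLD) (lamA4 Gam wRD) (lamA4 Gam wLU) (lamA4 Gam wRU) in
  let SD := 2 * min4 (lamB1 Gam wLD) (lamB1 Gam wRD) (lamB1 Gam wLU) (lamB1 Gam wRU) in
  let SU := 2 * max4 (lamB4 Gam wLD) (lamB4 Gam wRD) (lamB4 Gam wLU) (lamB4 Gam wRU) in
  let den := (SR - SL) * (SU - SD) in
  let ULD := to_cons Gam wLD in let URD := to_cons Gam wRD in
  let ULU := to_cons Gam wLU in let URU := to_cons Gam wRU in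
  let FLD := fluxF Gam wLD in let FRD := fluxF Gam wRD in
  let FLU := fluxF Gam wLU in let FRU := fluxF Gam wRU in
  let GLD := fluxG Gam wLD in let GRD := fluxG Gam wRD in
  let GLU := fluxG Gam wLU in let GRU := fluxG Gam wRU in
  let term1 := csub (cadd (cscale (SR * SU) URU) (cscale (SL * SD) ULD))
                    (cadd (cscale (SR * SD) URD) (cscale (SL * SU) ULU)) in
  let term2 := csub (cscale SU (csub FRU FLU)) (cscale SD (csub FRD FLD)) in
  let term3 := csub (cscale SR (csub GRU GRD)) (cscale SL (csub GLU GLD)) in
  cscale (/ den) (csub (csub term1 term2) term3).

Definition wave_speeds_ok (Gam : R) (wLD wRD wLU wRU : prim) : Prop :=
  2 * min4 (lamA1 Gam wLD) (lamA1 Gam wRD) (lamA1 Gam wLU) (lamA1 Gam wRU) < 0 /\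
  0 < 2 * max4 (lamA4 Gam wLD) (lamA4 Gam wRD) (lamA4 Gam wLU) (lamA4 Gam wRU) /\
  2 * min4 (lamB1 Gam wLD) (lamB1 Gam wRD) (lamB1 Gam wLU) (lamB1 Gam wRU) < 0 /\
  0 < 2 * max4 (lamB4 Gam wLD) (lamB4 Gam wRD) (lamB4 Gam wLU) (lamB4 Gam wRU).

(* Main.v *)
Require Import Defs.
From Stdlib Require Import Reals Lra Psatz.
Open Scope R_scope.

Lemma sq_pos_aux (u v : R) : 0 < u - v -> v^2 < u^2 -> 0 < u.
Proof. intros H1 H2. destruct (Rle_lt_dec u 0); [|lra]. nra. Qed.

Lemma core_alg (Gam rho e a b s c2 gam K : R) :
  1 < Gam <= 2 -> 0 < rho -> 0 < e -> a^2+b^2 < 1 -> 0 < gam ->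
  gam^2 * (1 - (a^2+b^2)) = 1 ->
  0 <= c2 -> c2 * (1 + Gam*e) = Gam*(Gam-1)*e ->
  0 <= K -> K^2 = c2*(1-(a^2+b^2))*(1-a^2-c2*((a^2+b^2)-a^2)) ->
  0 < s -> a*(1-c2) + K <= s*(1-c2*(a^2+b^2)) ->
  let p := (Gam-1)*rho*e in
  let h := 1 + Gam*e in
  let D := rho*gam in let H := D*h*gam in
  0 < D*(s-a) /\ 0 < (H-p)*(s-a) - p*a /\
  (D*(s-a))^2 + (H*a*(s-a)-p)^2 + (H*b*(s-a))^2 < ((H-p)*(s-a)-p*a)^2.
Proof.
  intros HG Hr He Hq Hgam Hgq Hc0 Hc HK0 HK Hs HT p h D H.
  set (q := a^2+b^2) in *.
  assert (Hb2 := pow2_ge_0 b). assert (Haa := pow2_ge_0 a).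
  assert (Hq0 : 0 <= q) by (unfold q; lra).
  assert (Ha2 : a^2 <= q) by (unfold q; lra).
  assert (Hc1 : c2 < 1).
  { assert (HGe : 0 < Gam*e) by nra.
    assert (c2 * (1+Gam*e) < 1 + Gam*e) by (rewrite Hc; nra).
    apply (Rmult_lt_reg_r (1+Gam*e)); lra. }
  assert (Hc2q : 0 < 1 - c2*q) by nra.
  assert (HD : 0 < 1 - a^2 - c2*(q-a^2)) by nra.
  set (T := s*(1-c2*q) - a*(1-c2)).
  assert (HTK : K <= T) by (unfold T; lra).
  assert (HR : 0 <= (1-c2)*(s-a)^2 - c2*(1-s^2)*(1-q)).
  { assert (E1 : (1-c2*q)*((1-c2)*(s-a)^2 - c2*(1-s^2)*(1-q)) = T^2 - K^2)
      by (rewrite HK; unfold T; ring).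
    assert (0 <= T^2 - K^2) by nra.
    nra. }
  assert (Hk : 0 < s - a).
  { assert (E2 : K^2 - (a*c2*(1-q))^2 = c2*(1-q)*(1-a^2)*(1-c2*q)) by (rewrite HK; ring).
    assert (Hc2p : 0 < c2).
    { assert (0 < Gam*(Gam-1)*e) by (apply Rmult_lt_0_compat; [apply Rmult_lt_0_compat|]; lra).
      destruct Hc0 as [?|E0]; [lra|]. rewrite <- E0 in Hc. lra. }
    assert (0 < c2*(1-q)*(1-a^2)*(1-c2*q)).
    { apply Rmult_lt_0_compat; [|lra]. apply Rmult_lt_0_compat; [|nra]. nra. }
    assert (a*c2*(1-q) < K) by nra.
    assert ((1-c2*q)*(s-a) = T - a*c2*(1-q)) by (unfold T; ring).
    nra. }
  set (k := s - a) in *.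
  assert (HQ : ((H-p)*k-p*a)^2 - (D*k)^2 - (H*a*k-p)^2 - (H*b*k)^2
     = k^2*gam^2*(rho^2*(h^2-1) - 2*rho*h*p) + p^2*(s^2-1)).
  { assert (E3 : ((H-p)*k-p*a)^2 - (D*k)^2 - (H*a*k-p)^2 - (H*b*k)^2
       = k^2*(H^2*(1-q) - D^2) - 2*H*p*k^2 + p^2*(s^2-1)) by (unfold k, q; ring).
    rewrite E3. unfold H, D.
    replace ((rho * gam * h * gam) ^ 2 * (1 - q)) with (rho^2*h^2*gam^2*(gam^2*(1-q))) by ring.
    rewrite Hgq. ring. }
  assert (HM : rho^2*(h^2-1) - 2*rho*h*p = rho^2*e*(2 + Gam*(2-Gam)*e)) by (unfold h, p; ring).
  rewrite HM in HQ.
  assert (Hx : 0 <= Gam*(2-Gam)*e).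
  { apply Rmult_le_pos; [|lra]. apply Rmult_le_pos; lra. }
  set (x := Gam*(2-Gam)*e) in *.
  assert (HMp : 0 < rho^2*e*(2+x)).
  { apply Rmult_lt_0_compat; [|lra]. apply Rmult_lt_0_compat; [nra|lra]. }
  set (M := rho^2*e*(2+x)) in *.
  assert (Hg2 : 0 < gam^2) by nra.
  assert (Hk2 : 0 < k^2) by nra.
  assert (HRg : c2*(1-s^2) <= (1-c2)*k^2*gam^2).
  { assert (0 <= gam^2 * ((1-c2)*k^2 - c2*(1-s^2)*(1-q))) by (apply Rmult_le_pos; lra).
    assert (E4 : gam^2 * ((1-c2)*k^2 - c2*(1-s^2)*(1-q)) = (1-c2)*k^2*gam^2 - c2*(1-s^2)*(gam^2*(1-q))) by ring.
    rewrite Hgq in E4. lra. }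
  assert (HMc : p^2*(1-c2) < M*c2).
  { assert (E5 : (M*c2 - p^2*(1-c2))*(1+Gam*e) = rho^2*e^2*(Gam-1)*(Gam*(2+x) - (Gam-1)*(1+x))).
    { replace (M*c2 - p^2*(1-c2)) with (M*c2 - p^2 + p^2*c2) by ring.
      replace ((M * c2 - p ^ 2 + p ^ 2 * c2) * (1 + Gam * e)) with
        (M*(c2*(1+Gam*e)) - p^2*(1+Gam*e) + p^2*(c2*(1+Gam*e))) by ring.
      rewrite Hc. unfold M, x, p. ring. }
    assert (0 < rho^2*e^2*(Gam-1)*(Gam*(2+x) - (Gam-1)*(1+x))).
    { replace (Gam*(2+x) - (Gam-1)*(1+x)) with (Gam+1+x) by ring.
      apply Rmult_lt_0_compat; [|lra]. apply Rmult_lt_0_compat; [|lra]. apply Rmult_lt_0_compat; nra. }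
    assert (0 < 1 + Gam*e) by nra.
    nra. }
  assert (HQp : 0 < ((H-p)*k-p*a)^2 - (D*k)^2 - (H*a*k-p)^2 - (H*b*k)^2).
  { rewrite HQ. destruct (Rle_lt_dec (s^2) 1) as [Hs1|Hs1].
    - assert (0 < 1 - c2) by lra.
      assert (M*(c2*(1-s^2)) <= M*((1-c2)*k^2*gam^2)) by (apply Rmult_le_compat_l; lra).
      assert (p^2*(1-c2)*(1-s^2) <= M*c2*(1-s^2)) by (apply Rmult_le_compat_r; lra).
      assert (0 < k^2*gam^2*M) by (apply Rmult_lt_0_compat; [nra|lra]).
      destruct (Rle_lt_dec (s^2) 1) ; nra.
    - assert (0 < k^2*gam^2*M) by (apply Rmult_lt_0_compat; [nra|lra]).
      assert (0 <= p^2*(s^2-1)) by (apply Rmult_le_pos; nra).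
      lra. }
  assert (HDp : 0 < D) by (unfold D; nra).
  assert (HVE : 0 < (H-p)*k - p*a).
  { assert (Ha1 : a < 1) by (destruct (Rle_lt_dec 1 a); [nra|lra]).
    assert (HHp : 0 < H) by (unfold H, h; apply Rmult_lt_0_compat; [apply Rmult_lt_0_compat|]; nra).
    destruct (Rle_lt_dec s 1) as [Hs1|Hs1].
    - assert (Hd : 0 < ((H-p)*k - p*a) - (H*a*k-p)).
      { replace (((H-p)*k - p*a) - (H*a*k-p)) with (H*k*(1-a) + p*(1-s)) by (unfold k; ring).
        assert (0 < H*k*(1-a)) by (apply Rmult_lt_0_compat; [apply Rmult_lt_0_compat|]; lra).
        assert (0 <= p*(1-s)) by (apply Rmult_le_pos; unfold p; [apply Rmult_le_pos; [apply Rmult_le_pos|]|]; lra).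
        lra. }
      assert (Hsq : (H*a*k-p)^2 < ((H-p)*k - p*a)^2).
      { assert (0 <= (D*k)^2) by apply pow2_ge_0.
        assert (0 <= (H*b*k)^2) by apply pow2_ge_0. lra. }
      exact (sq_pos_aux _ _ Hd Hsq).
    - assert (Hg1 : 1 <= gam^2*(1-a)*(1+a)).
      { assert (gam^2*(1-q) <= gam^2*((1-a)*(1+a))) by (apply Rmult_le_compat_l; nra). nra. }
      assert (Hg3 : 1/2 < gam^2*(1-a)).
      { assert (0 < gam^2*(1-a)) by (apply Rmult_lt_0_compat; lra).
        assert (1+a < 2) by lra. nra. }
      assert (Hrh : 0 < rho*h).
      { unfold h; apply Rmult_lt_0_compat; [lra|]. assert (0<Gam*e) by (apply Rmult_lt_0_compat; lra). lra. }
      assert (HHa : p < H*(1-a)).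
      { replace (H*(1-a)) with (rho*h*(gam^2*(1-a))) by (unfold H, D; ring).
        assert (rho*h*(1/2) < rho*h*(gam^2*(1-a))) by (apply Rmult_lt_compat_l; lra).
        assert (p <= rho*h*(1/2)).
        { unfold p, h. assert (0 <= rho*(2-Gam)*e) by (apply Rmult_le_pos; [apply Rmult_le_pos|]; lra).
          replace (rho * (1 + Gam * e) * (1 / 2)) with ((Gam - 1) * rho * e + rho/2 + rho*(2-Gam)*e/2) by field. lra. }
        lra. }
      assert (HHp2 : p < H).
      { assert (Hg4 : 1 <= gam^2) by nra.
        replace H with (rho*h*gam^2) by (unfold H, D; ring).
        assert (rho*h*1 <= rho*h*gam^2) by (apply Rmult_le_compat_l; lra).
        assert (p <= rho*h*(1/2)).
        { unfold p, h. assert (0 <= rho*(2-Gam)*e) by (apply Rmult_le_pos; [apply Rmult_le_pos|]; lra).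
          replace (rho * (1 + Gam * e) * (1 / 2)) with ((Gam - 1) * rho * e + rho/2 + rho*(2-Gam)*e/2) by field. lra. }
        lra. }
      replace ((H-p)*k - p*a) with (s*(H-p) - H*a) by (unfold k; ring).
      assert (s*(H-p) > 1*(H-p)) by (apply Rmult_lt_compat_r; lra).
      lra. }
  split; [nra|]. split; [exact HVE|]. lra.
Qed.


Lemma core_w (Gam : R) (w : prim) (a b s : R) :
  1 < Gam <= 2 -> admissible_prim w -> vel2 w = a^2 + b^2 ->
  0 < s -> lam_gen Gam w a 1 <= s ->
  let D := rho w * lorentz w in let H := D * enthalpy Gam w * lorentz w in
  let p := pr w in
  0 < D*(s-a) /\ 0 < (H-p)*(s-a) - p*a /\
  (D*(s-a))^2 + (H*a*(s-a)-p)^2 + (H*b*(s-a))^2 < ((H-p)*(s-a)-p*a)^2.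
Proof.
  intros HG [Hr [Hp Hv]] Hq Hs Hl D H p.
  set (e := pr w / ((Gam-1)*rho w)).
  assert (He : 0 < e) by (unfold e; apply Rdiv_lt_0_compat; [lra| apply Rmult_lt_0_compat; lra]).
  assert (Hpe : pr w = (Gam-1)*rho w*e) by (unfold e; field; lra).
  assert (Hh : enthalpy Gam w = 1 + Gam*e).
  { unfold enthalpy, int_energy. rewrite Hpe. field. lra. }
  set (q := vel2 w) in *.
  assert (Hsq : 0 < sqrt (1 - q)) by (apply sqrt_lt_R0; lra).
  assert (Hgam : 0 < lorentz w) by (unfold lorentz; fold q; apply Rinv_0_lt_compat; lra).
  assert (Hig : / lorentz w = sqrt (1-q)) by (unfold lorentz; fold q; rewrite Rinv_inv; reflexivity).
  assert (Hig2 : (/ lorentz w)^2 = 1 - q) by (rewrite Hig; simpl; rewrite Rmult_1_r; apply sqrt_sqrt; lra).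
  assert (Hgq : lorentz w ^2 * (1 - q) = 1).
  { rewrite <- Hig2. field. lra. }
  set (c := sound_speed Gam w).
  assert (Hc0 : 0 <= c) by apply sqrt_pos.
  assert (Hcarg : 0 <= Gam * pr w / (rho w * enthalpy Gam w)).
  { rewrite Hh. unfold Rdiv. apply Rmult_le_pos; [nra|]. left. apply Rinv_0_lt_compat. apply Rmult_lt_0_compat; [lra|].
    assert (0 < Gam*e) by (apply Rmult_lt_0_compat; lra). lra. }
  assert (Hc2 : c^2 = Gam * pr w / (rho w * enthalpy Gam w)).
  { unfold c, sound_speed. simpl. rewrite Rmult_1_r. apply sqrt_sqrt. exact Hcarg. }
  assert (HGe : 0 < Gam*e) by (apply Rmult_lt_0_compat; lra).
  assert (Hc : c^2 * (1 + Gam*e) = Gam*(Gam-1)*e).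
  { rewrite Hc2, Hh, Hpe. field. split; lra. }
  assert (Hc1 : c^2 < 1).
  { assert (c^2 * (1+Gam*e) < 1 + Gam*e) by (rewrite Hc; nra).
    apply (Rmult_lt_reg_r (1+Gam*e)); lra. }
  assert (Hc2p : 0 <= c^2) by apply pow2_ge_0.
  assert (Hb2 := pow2_ge_0 b). assert (Haa := pow2_ge_0 a).
  assert (HDl : 0 <= 1 - a^2 - c^2*(q - a^2)).
  { replace (1 - a^2 - c^2*(q - a^2)) with ((1-a^2)*(1-c^2) + c^2*(1-q)) by ring.
    assert (0 <= (1-a^2)*(1-c^2)) by (apply Rmult_le_pos; lra).
    assert (0 <= c^2*(1-q)) by (apply Rmult_le_pos; lra). lra. }
  set (K := c * / lorentz w * sqrt (1 - a^2 - c^2*(q - a^2))).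
  assert (HK0 : 0 <= K).
  { unfold K. apply Rmult_le_pos; [apply Rmult_le_pos; [lra|]; left; apply Rinv_0_lt_compat; lra|apply sqrt_pos]. }
  assert (HK : K^2 = c^2*(1-(a^2+b^2))*(1-a^2-c^2*((a^2+b^2)-a^2))).
  { rewrite <- Hq. unfold K. 
    replace ((c * / lorentz w * sqrt (1 - a ^ 2 - c ^ 2 * (q - a ^ 2))) ^ 2) with
      (c^2 * (/ lorentz w)^2 * (sqrt (1 - a ^ 2 - c ^ 2 * (q - a ^ 2)))^2) by ring.
    rewrite Hig2. rewrite (pow2_sqrt _ HDl). ring. }
  assert (Hcq : 0 < 1 - c^2*q) by nra.
  assert (HT : a*(1-c^2) + K <= s*(1-c^2*(a^2+b^2))).
  { rewrite <- Hq. unfold lam_gen in Hl. fold c q in Hl.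
    replace (a * (1 - c ^ 2) + 1 * c * / lorentz w * sqrt (1 - a ^ 2 - c ^ 2 * (q - a ^ 2)))
      with (a*(1-c^2) + K) in Hl by (unfold K; ring).
    apply (Rmult_le_compat_r (1 - c^2*q)) in Hl; [|lra].
    replace ((a * (1 - c ^ 2) + K) / (1 - c ^ 2 * q) * (1 - c ^ 2 * q)) with (a*(1-c^2)+K) in Hl by (field; lra).
    lra. }
  rewrite Hq in Hgq.
  assert (Hv' : a^2+b^2 < 1) by lra.
  pose proof (core_alg Gam (rho w) e a b s (c^2) (lorentz w) K HG Hr He Hv' Hgam Hgq Hc2p Hc HK0 HK Hs HT) as R.
  simpl in R. unfold D, H, p. rewrite Hh, Hpe. exact R.
Qed.

Definition cone (X : cons) : Prop :=
  0 < cD X /\ 0 < cE X /\ cD X ^ 2 + (cm1 X ^ 2 + cm2 X ^ 2) < cE X ^ 2.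

Lemma cone_of (X : cons) d m1 m2 E' :
  cD X = d -> cm1 X ^2 + cm2 X ^2 = m1^2 + m2^2 -> cE X = E' ->
  0 < d /\ 0 < E' /\ d^2 + m1^2 + m2^2 < E'^2 -> cone X.
Proof. intros H1 H2 H3 [H4 [H5 H6]]. unfold cone. rewrite H1, H2, H3. lra. Qed.

Lemma lam_neg Gam w a : lam_gen Gam w (-a) 1 = - lam_gen Gam w a (-1).
Proof. unfold lam_gen. replace ((-a)^2) with (a^2) by ring. unfold Rdiv. ring. Qed.

Lemma F_plus Gam w s : 1 < Gam <= 2 -> admissible_prim w -> 0 < s -> lamA4 Gam w <= s ->
  cone (csub (cscale s (to_cons Gam w)) (fluxF Gam w)).
Proof.
  intros HG Hw Hs Hl.
  pose proof (core_w Gam w (vx w) (vy w) s HG Hw eq_refl Hs Hl) as R. cbv zeta in R.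
  eapply cone_of; [| | |exact R]; unfold csub, cadd, cscale, fluxF, to_cons; simpl; ring.
Qed.

Lemma F_minus Gam w s : 1 < Gam <= 2 -> admissible_prim w -> s < 0 -> s <= lamA1 Gam w ->
  cone (csub (fluxF Gam w) (cscale s (to_cons Gam w))).
Proof.
  intros HG Hw Hs Hl.
  assert (Hl' : lam_gen Gam w (- vx w) 1 <= - s) by (rewrite lam_neg; unfold lamA1 in Hl; lra).
  assert (Hq : vel2 w = (- vx w)^2 + vy w ^2) by (unfold vel2; ring).
  assert (Hs' : 0 < -s) by lra.
  pose proof (core_w Gam w (- vx w) (vy w) (-s) HG Hw Hq Hs' Hl') as R. cbv zeta in R.
  eapply cone_of; [| | |exact R]; unfold csub, cadd, cscale, fluxF, to_cons; simpl; ring.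
Qed.

Lemma G_plus Gam w s : 1 < Gam <= 2 -> admissible_prim w -> 0 < s -> lamB4 Gam w <= s ->
  cone (csub (cscale s (to_cons Gam w)) (fluxG Gam w)).
Proof.
  intros HG Hw Hs Hl.
  assert (Hq : vel2 w = vy w ^2 + vx w ^2) by (unfold vel2; ring).
  pose proof (core_w Gam w (vy w) (vx w) s HG Hw Hq Hs Hl) as R. cbv zeta in R.
  eapply cone_of; [| | |exact R]; unfold csub, cadd, cscale, fluxG, to_cons; simpl; ring.
Qed.

Lemma G_minus Gam w s : 1 < Gam <= 2 -> admissible_prim w -> s < 0 -> s <= lamB1 Gam w ->
  cone (csub (fluxG Gam w) (cscale s (to_cons Gam w))).
Proof.
  intros HG Hw Hs Hl.
  assert (Hl' : lam_gen Gam w (- vy w) 1 <= - s) by (rewrite lam_neg; unfold lamB1 in Hl; lra).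
  assert (Hq : vel2 w = (- vy w)^2 + vx w ^2) by (unfold vel2; ring).
  assert (Hs' : 0 < -s) by lra.
  pose proof (core_w Gam w (- vy w) (vx w) (-s) HG Hw Hq Hs' Hl') as R. cbv zeta in R.
  eapply cone_of; [| | |exact R]; unfold csub, cadd, cscale, fluxG, to_cons; simpl; ring.
Qed.

Lemma cone_scale k X : 0 < k -> cone X -> cone (cscale k X).
Proof.
  intros Hk [H1 [H2 H3]]. unfold cone, cscale; cbn [cD cm1 cm2 cE].
  split; [nra|]. split; [nra|].
  replace ((k * cD X) ^ 2 + ((k * cm1 X) ^ 2 + (k * cm2 X) ^ 2)) with
    (k^2 * (cD X ^ 2 + (cm1 X ^ 2 + cm2 X ^ 2))) by ring.
  replace ((k * cE X) ^ 2) with (k^2 * cE X ^ 2) by ring.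
  apply Rmult_lt_compat_l; [nra|lra].
Qed.

Lemma cone_add X Y : cone X -> cone Y -> cone (cadd X Y).
Proof.
  destruct X as [d1 a1 b1 e1], Y as [d2 a2 b2 e2].
  unfold cone, cadd; cbn [cD cm1 cm2 cE]. intros [H1 [H2 H3]] [H4 [H5 H6]].
  split; [lra|]. split; [lra|].
  set (n1 := d1^2 + (a1^2 + b1^2)) in *. set (n2 := d2^2 + (a2^2 + b2^2)) in *.
  set (dt := d1*d2 + a1*a2 + b1*b2).
  assert (Lag : n1*n2 - dt^2 = (d1*a2-d2*a1)^2 + (d1*b2-d2*b1)^2 + (a1*b2-a2*b1)^2)
    by (unfold n1, n2, dt; ring).
  assert (HCS : dt^2 <= n1*n2).
  { assert (0 <= (d1*a2-d2*a1)^2) by apply pow2_ge_0.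
    assert (0 <= (d1*b2-d2*b1)^2) by apply pow2_ge_0.
    assert (0 <= (a1*b2-a2*b1)^2) by apply pow2_ge_0. lra. }
  assert (Hn1 : 0 <= n1) by (unfold n1; nra). assert (Hn2 : 0 <= n2) by (unfold n2; nra).
  assert (HP : n1*n2 < (e1*e2)^2).
  { replace ((e1*e2)^2) with (e1^2*e2^2) by ring.
    apply Rle_lt_trans with (e1^2*n2). apply Rmult_le_compat_r; lra.
    apply Rmult_lt_compat_l; nra. }
  assert (Hdt : dt < e1*e2).
  { assert (0 < e1*e2) by nra.
    destruct (Rle_lt_dec (e1*e2) dt); [|lra]. nra. }
  replace ((d1 + d2) ^ 2 + ((a1 + a2) ^ 2 + (b1 + b2) ^ 2)) with (n1 + n2 + 2*dt)
    by (unfold n1, n2, dt; ring).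
  nra.
Qed.

Lemma combo Gam wLD wRD wLU wRU :
  let sL := min4 (lamA1 Gam wLD) (lamA1 Gam wRD) (lamA1 Gam wLU) (lamA1 Gam wRU) in
  let sR := max4 (lamA4 Gam wLD) (lamA4 Gam wRD) (lamA4 Gam wLU) (lamA4 Gam wRU) in
  let sD := min4 (lamB1 Gam wLD) (lamB1 Gam wRD) (lamB1 Gam wLU) (lamB1 Gam wRU) in
  let sU := max4 (lamB4 Gam wLD) (lamB4 Gam wRD) (lamB4 Gam wLU) (lamB4 Gam wRU) in
  let U w := to_cons Gam w in let F w := fluxF Gam w in let G w := fluxG Gam w in
  hll2d_state Gam wLD wRD wLU wRU =
  cscale (2 / ((2*sR - 2*sL)*(2*sU - 2*sD)))
   (cadd (cadd (cadd (cscale sU (csub (cscale sR (U wRU)) (F wRU)))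
                     (cscale sR (csub (cscale sU (U wRU)) (G wRU))))
               (cadd (cscale (-sD) (csub (F wLD) (cscale sL (U wLD))))
                     (cscale (-sL) (csub (G wLD) (cscale sD (U wLD))))))
         (cadd (cadd (cscale (-sD) (csub (cscale sR (U wRD)) (F wRD)))
                     (cscale sR (csub (G wRD) (cscale sD (U wRD)))))
               (cadd (cscale sU (csub (F wLU) (cscale sL (U wLU))))
                     (cscale (-sL) (csub (cscale sU (U wLU)) (G wLU)))))).
Proof.
  intros sL sR sD sU U F G. unfold hll2d_state. cbv zeta.
  subst sL sR sD sU U F G.
  generalize (min4 (lamA1 Gam wLD) (lamA1 Gam wRD) (lamA1 Gam wLU) (lamA1 Gam wRU)) as a.
  generalize (max4 (lamA4 Gam wLD) (lamA4 Gam wRD) (lamA4 Gam wLU) (lamA4 Gam wRU)) as b.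
  generalize (min4 (lamB1 Gam wLD) (lamB1 Gam wRD) (lamB1 Gam wLU) (lamB1 Gam wRU)) as c.
  generalize (max4 (lamB4 Gam wLD) (lamB4 Gam wRD) (lamB4 Gam wLU) (lamB4 Gam wRU)) as d.
  generalize (to_cons Gam wLD) (to_cons Gam wRD) (to_cons Gam wLU) (to_cons Gam wRU).
  generalize (fluxF Gam wLD) (fluxF Gam wRD) (fluxF Gam wLU) (fluxF Gam wRU).
  generalize (fluxG Gam wLD) (fluxG Gam wRD) (fluxG Gam wLU) (fluxG Gam wRU).
  intros [] [] [] [] [] [] [] [] [] [] [] [] d c b a.
  unfold cscale, csub, cadd; simpl. unfold Rdiv. f_equal; ring.
Qed.

Lemma min4_le a b c d : min4 a b c d <= a /\ min4 a b c d <= b /\ min4 a b c d <= c /\ min4 a b c d <= d.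
Proof.
  unfold min4. repeat split.
  - eapply Rle_trans; [apply Rmin_l|apply Rmin_l].
  - eapply Rle_trans; [apply Rmin_l|apply Rmin_r].
  - eapply Rle_trans; [apply Rmin_r|apply Rmin_l].
  - eapply Rle_trans; [apply Rmin_r|apply Rmin_r].
Qed.

Lemma max4_ge a b c d : a <= max4 a b c d /\ b <= max4 a b c d /\ c <= max4 a b c d /\ d <= max4 a b c d.
Proof.
  unfold max4. repeat split.
  - eapply Rle_trans; [apply Rmax_l|apply Rmax_l].
  - eapply Rle_trans; [apply Rmax_r|apply Rmax_l].
  - eapply Rle_trans; [apply Rmax_l|apply Rmax_r].
  - eapply Rle_trans; [apply Rmax_r|apply Rmax_r].
Qed.

Theorem theorem1 (Gam : R) (wLD wRD wLU wRU : prim) :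
  1 < Gam <= 2 ->
  admissible_prim wLD -> admissible_prim wRD ->
  admissible_prim wLU -> admissible_prim wRU ->
  wave_speeds_ok Gam wLD wRD wLU wRU ->
  let U := hll2d_state Gam wLD wRD wLU wRU in
  0 < cD U /\ 0 < cE U /\ cE U ^ 2 - cD U ^ 2 - (cm1 U ^ 2 + cm2 U ^ 2) > 0.
Proof.
  intros HG H1 H2 H3 H4 [W1 [W2 [W3 W4]]] U.
  assert (C : cone U).
  { unfold U. rewrite combo. cbv zeta.
    set (sL := min4 (lamA1 Gam wLD) (lamA1 Gam wRD) (lamA1 Gam wLU) (lamA1 Gam wRU)) in *.
    set (sR := max4 (lamA4 Gam wLD) (lamA4 Gam wRD) (lamA4 Gam wLU) (lamA4 Gam wRU)) in *.
    set (sD := min4 (lamB1 Gam wLD) (lamB1 Gam wRD) (lamB1 Gam wLU) (lamB1 Gam wRU)) in *.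
    set (sU := max4 (lamB4 Gam wLD) (lamB4 Gam wRD) (lamB4 Gam wLU) (lamB4 Gam wRU)) in *.
    destruct (min4_le (lamA1 Gam wLD) (lamA1 Gam wRD) (lamA1 Gam wLU) (lamA1 Gam wRU)) as [L1 [L2 [L3 L4]]].
    destruct (max4_ge (lamA4 Gam wLD) (lamA4 Gam wRD) (lamA4 Gam wLU) (lamA4 Gam wRU)) as [R1 [R2 [R3 R4]]].
    destruct (min4_le (lamB1 Gam wLD) (lamB1 Gam wRD) (lamB1 Gam wLU) (lamB1 Gam wRU)) as [D1 [D2 [D3 D4]]].
    destruct (max4_ge (lamB4 Gam wLD) (lamB4 Gam wRD) (lamB4 Gam wLU) (lamB4 Gam wRU)) as [U1 [U2 [U3 U4]]].
    fold sL sR sD sU in L1, L2, L3, L4, R1, R2, R3, R4, D1, D2, D3, D4, U1, U2, U3, U4.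
    assert (hL : sL < 0) by lra. assert (hR : 0 < sR) by lra.
    assert (hD : sD < 0) by lra. assert (hU : 0 < sU) by lra.
    apply cone_scale.
    { unfold Rdiv. apply Rmult_lt_0_compat; [lra|]. apply Rinv_0_lt_compat.
      apply Rmult_lt_0_compat; lra. }
    repeat apply cone_add; apply cone_scale; try lra.
    - apply F_plus; auto.
    - apply G_plus; auto.
    - apply F_minus; auto.
    - apply G_minus; auto.
    - apply F_plus; auto.
    - apply G_minus; auto.
    - apply F_minus; auto.
    - apply G_plus; auto. }
  destruct C as [C1 [C2 C3]]. split; [lra|]. split; lra.
Qed.
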